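(* Let $\nu\in\mathcal{P}(\Omega)$ and let $(\mathcal{A},X)$ be a tagged partition of $\Omega$ associated with $\nu$, $\mathcal{A}=(\Omega_1,\dots,\Omega_N)$, $X=(x_1,\dots,x_N)$. (i) Let $y\in\mathscr{C}^{0,1}(\Omega,\mathbb{R}^d)$ and $\Xi=(y(x_1),\dots,y(x_N))$. Then for every $f\in\mathscr{C}^\infty_c(\Omega\times\mathbb{R}^d)$, $$\big|\langle\mu^\nu_y-\mu^E_{(X,\Xi)},f\rangle\big|\le\frac{C_\Omega}N\operatorname{Lip}\big(x\mapsto f(x,y(x))\big).$$ (ii) Let $\Xi=(\xi_1,\dots,\xi_N)\in\mathbb{R}^{dN}$ and $y_\Xi(x)=\sum_{i=1}^N\xi_i\mathds{1}_{\Omega_i}(x)$. Then for every $f\in\mathscr{C}^\infty_c(\Omega\times\mathbb{R}^d)$, $$\big|\langle\mu^\nu_{y_\Xi}-\mu^E_{(X,\Xi)},f\rangle\big|\le\frac{C_\Omega}N\max_{1\le i\le N}\operatorname{Lip}\big(x\mapsto f(x,\xi_i)\big).$$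
   Context: $(\Omega,d_\Omega)$ is a complete metric space. A tagged partition of $\Omega$ associated with $\nu$: disjoint subsets $\Omega_1,\dots,\Omega_N$ with union $\Omega$, $\nu(\Omega_i)=1/N$, $\mathrm{diam}(\Omega_i)\le C_\Omega/N$, and points $x_i\in\Omega_i$. Empirical measure: $\mu^E_{(X,\Xi)}=\frac1N\sum_{i=1}^N\delta_{x_i}\otimes\delta_{\xi_i}$. $\nu$-monokinetic measure: for measurable $y:\Omega\to\mathbb{R}^d$, $\mu^\nu_y=\nu\otimes\delta_{y(\cdot)}$, i.e. $\langle\mu^\nu_y,f\rangle=\int_\Omega f(x,y(x))\,d\nu(x)$. $\mathds{1}_{\Omega_i}$ is the indicator function; $\operatorname{Lip}$ the Lipschitz constant; $\mathscr{C}^{0,1}$ Lipschitz maps. *)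

(* Defs.v *)
From HB Require Import structures.
From mathcomp Require Import all_boot all_order all_algebra.
From mathcomp Require Import all_classical all_reals all_analysis.
Set Implicit Arguments. Unset Strict Implicit. Unset Printing Implicit Defensive.
Import Order.TTheory GRing.Theory Num.Theory.
Import numFieldNormedType.Exports.
Local Open Scope classical_set_scope.
Local Open Scope ring_scope.

Section Defs.
Variables (R : realType) (T : Type) (dist : T -> T -> R).

Definition is_metric : Prop :=
  [/\ forall x y, 0 <= dist x y,
      forall x y, dist x y = 0 <-> x = y,
      forall x y, dist x y = dist y x &
      forall x y z, dist x z <= dist x y + dist y z].

Definition metric_complete : Prop :=
  forall u : nat -> T,
    (forall e : R, 0 < e -> exists M : nat, forall m n : nat,
        (M <= m)%N -> (M <= n)%N -> dist (u m) (u n) < e) ->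
    exists l : T, (fun n => dist (u n) l) @ \oo --> (0 : R).

Definition metric_open (A : set T) : Prop :=
  forall x, A x -> exists2 r : R, 0 < r & forall y, dist x y < r -> A y.

Definition Lip (g : T -> R) : \bar R :=
  ereal_sup ([set 0%E] `|`
    [set r | exists x y, x <> y /\ r = (`|g x - g y| / dist x y)%:E]).

Definition lipschitz_map (n : nat) (y : T -> 'rV[R]_n) : Prop :=
  exists L : R, forall x x', `|y x - y x'| <= L * dist x x'.

Definition pdist (n : nat) (p q : T * 'rV[R]_n) : R :=
  Num.max (dist p.1 q.1) `|p.2 - q.2|.

Definition seq_compact (n : nat) (K : set (T * 'rV[R]_n)) : Prop :=
  forall u : nat -> T * 'rV[R]_n, (forall k, K (u k)) ->
    exists phi : nat -> nat, (forall k, (phi k < phi k.+1)%N) /\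
      exists2 l, K l & (fun k => pdist (u (phi k)) l) @ \oo --> (0 : R).

Definition test_function (n : nat) (f : T -> 'rV[R]_n -> R) : Prop :=
  (forall p : T * 'rV[R]_n, forall e : R, 0 < e -> exists2 del : R, 0 < del &
     forall q, pdist p q < del -> `|f p.1 p.2 - f q.1 q.2| < e) /\
  exists2 K : set (T * 'rV[R]_n), seq_compact K &
     forall p, ~ K p -> f p.1 p.2 = 0.

Definition tagged_partition {d} (T' : measurableType d) (dist' : T' -> T' -> R)
  (nu : probability T' R) (C : R) (N : nat)
  (A : 'I_N -> set T') (X : 'I_N -> T') : Prop :=
  [/\ (forall i, measurable (A i)) /\
        (forall i j, i != j -> A i `&` A j = set0),
      \bigcup_(i in [set: 'I_N]) A i = [set: T'],
      forall i, nu (A i) = (N%:R^-1)%:E,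
      forall i x y, A i x -> A i y -> dist' x y <= C / N%:R &
      forall i, A i (X i)].
End Defs.

(* <mu^nu_y, f> = \int f(x, y(x)) dnu(x) *)
Definition monokinetic_pair {R : realType} {d} {T : measurableType d} {n : nat}
  (nu : probability T R) (y : T -> 'rV[R]_n) (f : T -> 'rV[R]_n -> R) : \bar R :=
  (\int[nu]_x (f x (y x))%:E)%E.

(* <mu^E_(X,Xi), f> = 1/N sum_i f(x_i, xi_i) *)
Definition empirical_pair {R : realType} {T : Type} {n N : nat}
  (X : 'I_N -> T) (Xi : 'I_N -> 'rV[R]_n) (f : T -> 'rV[R]_n -> R) : R :=
  N%:R^-1 * \sum_(i < N) f (X i) (Xi i).

Definition piecewise_const {R : realType} {T : Type} {n N : nat}
  (A : 'I_N -> set T) (Xi : 'I_N -> 'rV[R]_n) (x : T) : 'rV[R]_n :=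
  \sum_(i < N) (\1_(A i) x) *: Xi i.

(* Main.v *)
Require Import Defs.
From HB Require Import structures.
From mathcomp Require Import all_boot all_order all_algebra.
From mathcomp Require Import all_classical all_reals all_analysis.
From mathcomp Require Import lra.
Import Order.TTheory GRing.Theory Num.Theory.
Import numFieldNormedType.Exports.
Local Open Scope classical_set_scope.
Local Open Scope ring_scope.

Section Helpers.
Variables (R : realType) (dT : measure_display) (T : measurableType dT)
  (nu : probability T R).

Lemma onehot N (A : 'I_N -> set T) i j x :
  (forall i j, i != j -> A i `&` A j = set0) -> A i x -> j != i -> ~ A j x.
Proof.
move=> disj Aix ji Ajx.
have : (A j `&` A i) x by split.
by rewrite disj.
Qed.

Lemma pw_meas N (A : 'I_N -> set T) (g : T -> R) (gi : 'I_N -> T -> R) :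
  (forall i, measurable (A i)) -> (forall i j, i != j -> A i `&` A j = set0) ->
  (forall x, exists i, A i x) ->
  (forall i, measurable_fun setT (gi i)) -> (forall i x, A i x -> g x = gi i x) ->
  measurable_fun setT g.
Proof.
move=> mA disj cov mg gE.
have -> : g = (fun x => \sum_(i < N) gi i x * \1_(A i) x).
  apply/funext => x; have [i Aix] := cov x.
  rewrite (bigD1 i) //= indicE mem_set // mulr1 big1 ?addr0; first exact: gE.
  move=> j ji; rewrite indicE memNset ?mulr0 //.
  move=> Ajx; have : (A j `&` A i) x by split.
  by rewrite disj.
apply: (@measurable_sum _ _ _ setT _ (index_enum 'I_N) (fun i x => gi i x * \1_(A i) x)) => i; apply: measurable_realfun.measurable_funM => //; exact: measurable_realfun.measurable_indic.
Qed.

Lemma lip_meas (dist : T -> T -> R)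
  (hm : @measurable _ T = <<s metric_open dist>>)
  (dpos : forall x y, 0 <= dist x y) (g : T -> R) (l : R) :
  0 <= l -> (forall x y, `|g x - g y| <= l * dist x y) -> measurable_fun setT g.
Proof.
move=> l0 gl.
have hR : @measurable _ R = <<s @measurable_realfun.RGenOInfty.G R >>.
  exact: measurable_realfun.RGenOInfty.measurableE.
apply: (@measurability _ _ _ _ setT g _ hR).
move=> _ [_ [b ->] <-]; rewrite hm; apply: sub_gen_smallest.
move=> t [_ /=]; rewrite in_itv /= andbT => bt.
exists ((g t - b) / (l + 1)).
  by rewrite divr_gt0 // ?subr_gt0 // ltr_wpDl.
move=> s dts; split => //=; rewrite in_itv /= andbT.
have h1 : g t - g s <= l * dist t s by exact: le_trans (ler_norm _) (gl _ _).
have l1 : 0 < l + 1 by rewrite ltr_wpDl.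
have h2 : dist t s * (l + 1) < g t - b.
  by move: dts; rewrite ltr_pdivlMr.
have d0 : 0 <= dist t s.
  exact: dpos.
nra.
Qed.


Lemma bdd_integrable (g : T -> R) (B : R) :
  measurable_fun setT g -> 0 <= B -> (forall x, `|g x| <= B) ->
  nu.-integrable setT (fun x => (g x)%:E).
Proof.
move=> mg B0 gB; apply/integrableP; split; first exact/measurable_realfun.measurable_EFinP.
apply: (@le_lt_trans _ _ (B%:E * nu setT)%E).
  apply: integral_le_bound => //.
  - exact/measurable_realfun.measurable_EFinP.
  - by apply: aeW => x _; rewrite abse_EFin lee_fin.
by rewrite probability_setT mule1 ltry.
Qed.

Lemma core N (A : 'I_N -> set T) (g : T -> R) (a : 'I_N -> R) (c : R) :
  (forall i, measurable (A i)) ->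
  (forall i j, i != j -> A i `&` A j = set0) ->
  (forall x, exists i, A i x) ->
  (forall i, nu (A i) = (N%:R^-1)%:E) ->
  measurable_fun setT g -> 0 <= c ->
  (forall i x, A i x -> `|g x - a i| <= c) ->
  (`| \int[nu]_x (g x)%:E - (N%:R^-1 * \sum_(i < N) a i)%:E | <= c%:E)%E.
Proof.
move=> mA disj cov muA mg c0 gb.
pose s x := \sum_(i < N) a i * \1_(A i) x.
have sE : forall i x, A i x -> s x = a i.
  move=> i x Aix; rewrite /s (bigD1 i) //= indicE mem_set // mulr1 big1 ?addr0 //.
  move=> j ji; rewrite indicE memNset ?mulr0 //.
  move=> Ajx; have : (A j `&` A i) x by split.
  by rewrite disj.
have ms : measurable_fun setT s.
  apply: (@measurable_sum _ _ _ setT _ (index_enum 'I_N) (fun i x => a i * \1_(A i) x)) => i.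
  apply: measurable_realfun.measurable_funM => //; exact: measurable_realfun.measurable_indic.
pose S := \sum_(i < N) `|a i|.
have S0 : 0 <= S by apply: sumr_ge0 => i _; exact: normr_ge0.
have sB : forall x, `|s x| <= S.
  move=> x; have [i Aix] := cov x; rewrite (sE _ _ Aix) /S (bigD1 i) //= lerDl.
  by apply: sumr_ge0 => j _; exact: normr_ge0.
have hB : forall x, `|g x - s x| <= c.
  by move=> x; have [i Aix] := cov x; rewrite (sE _ _ Aix); exact: gb.
have mh : measurable_fun setT (fun x => g x - s x).
  exact: measurable_realfun.measurable_funB.
have ih : nu.-integrable setT (fun x => (g x - s x)%:E).
  exact: (bdd_integrable _ _ mh c0 hB).
have is_ : nu.-integrable setT (fun x => (s x)%:E).
  exact: (bdd_integrable _ _ ms S0 sB).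
have -> : (fun x => (g x)%:E) = (fun x => (s x)%:E + (g x - s x)%:E)%E.
  by apply/funext => x; rewrite -EFinD addrC subrK.
rewrite integralD //.
have -> : (\int[nu]_x (s x)%:E = (N%:R^-1 * \sum_(i < N) a i)%:E)%E.
  have -> : (fun x => (s x)%:E) = (fun x => \sum_(i < N) ((a i)%:E * (\1_(A i) x)%:E))%E.
    by apply/funext => x; rewrite /s -sumEFin; apply: eq_bigr => i _; rewrite EFinM.
  have ii : forall i, nu.-integrable setT (fun x => (\1_(A i) x)%:E).
    move=> i; have mi : measurable_fun setT (\1_(A i) : T -> R).
      exact: measurable_realfun.measurable_indic.
    apply: (bdd_integrable _ 1 mi ler01).
    by move=> x; rewrite indicE; case: (_ \in _); rewrite ?normr1 ?normr0 ?ler01.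
  rewrite integral_sum //; last first.
    by move=> i; apply: integrableZl => //; exact (ii i).
  rewrite mulr_sumr -sumEFin; apply: eq_bigr => i _.
  rewrite integralZl //.
  rewrite integral_indic // setIT mulrC EFinM; congr (_ * _)%E; exact: muA.
have hfin := integrable_fin_num measurableT ih.
rewrite -(fineK hfin) -EFinD abse_EFin addrAC subrr add0r -abse_EFin (fineK hfin).
apply: le_trans (le_abse_integral _ _ _) _ => //.
  exact/measurable_realfun.measurable_EFinP.
apply: le_trans (integral_le_bound c%:E _ _ _ _) _ => //.
- exact/measurable_realfun.measurable_EFinP.
- by apply: aeW => x _; rewrite abse_EFin lee_fin.
suff -> : (c%:E * nu setT = c%:E)%E by [].
rewrite -[RHS]mule1; congr (_ * _)%E; exact: probability_setT.
Qed.


Lemma meta (dist : T -> T -> R) (C : R) (N : nat) (A : 'I_N -> set T) (X : 'I_N -> T)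
  (hm : @measurable _ T = <<s metric_open dist>>) (dm : is_metric dist)
  (tp : tagged_partition dist nu C A X)
  (g : T -> R) (gi : 'I_N -> T -> R) (L : \bar R) :
  (forall i x, A i x -> g x = gi i x) -> (forall i, (Lip dist (gi i) <= L)%E) ->
  (`| \int[nu]_x (g x)%:E - (N%:R^-1 * \sum_(i < N) gi i (X i))%:E | <= (C / N%:R)%:E * L)%E.
Proof.
move=> gE Lb.
case: dm => d0 deq dsym dtri.
case: tp => -[mA disj] covU muA diam XA.
have cov : forall x, exists i, A i x.
  move=> x; have : [set: T] x by [].
  by rewrite -covU => -[i _ Aix]; exists i.
have [x0 _] : exists x : T, True.
  apply: contrapT => nx.
  have T0 : [set: T] = set0.
    by apply/seteqP; split => x // _; apply: nx; exists x.
  have := probability_setT nu; rewrite T0 measure0 => h.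
  have : (0 < 1 :> \bar R)%E by rewrite lte_fin ltr01.
  by rewrite h ltxx.
have [i0 _] := cov x0.
set K := C / N%:R.
have K0 : 0 <= K.
  have := diam i0 _ _ (XA i0) (XA i0).
  by rewrite (proj2 (deq _ _) erefl).
have Lip0 : forall h, (0 <= Lip dist h)%E.
  by move=> h; apply: ereal_sup_ubound; left.
have L0 := le_trans (Lip0 _) (Lb i0).
case: L Lb L0 => [l | | ] Lb L0.
- have l0 : 0 <= l by rewrite -lee_fin.
  have lip : forall i x y, `|gi i x - gi i y| <= l * dist x y.
    move=> i x y; have [->|nxy] := pselect (x = y).
      by rewrite subrr normr0 mulr_ge0 // d0.
    have dpos : 0 < dist x y.
      by rewrite lt_def d0 andbT; apply/eqP => /deq.
    have : ((`|gi i x - gi i y| / dist x y)%:E <= l%:E)%E.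
      apply: le_trans (Lb i); apply: ereal_sup_ubound; right; exists x, y; by split.
    by rewrite lee_fin ler_pdivrMr.
  have mg : measurable_fun setT g.
    apply: (pw_meas _ _ _ _ mA disj cov _ gE) => i.
    exact: (lip_meas _ hm d0 _ _ l0 (lip i)).
  have bound : forall i x, A i x -> `|g x - gi i (X i)| <= l * K.
    move=> i x Aix; rewrite (gE _ _ Aix); apply: le_trans (lip i x (X i)) _.
    by apply: ler_wpM2l => //; exact: (diam i x (X i) Aix (XA i)).
  apply: le_trans (core _ _ _ _ _ mA disj cov muA mg (mulr_ge0 l0 K0) bound) _.
  by rewrite EFinM muleC.
- have [K00|Kn0] := eqVneq K 0.
    rewrite K00 mul0e.
    have eqx : forall i x, A i x -> x = X i.
      move=> i x Aix; have := diam i x (X i) Aix (XA i); rewrite -/K K00 => h.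
      by apply/deq/le_anti; rewrite h d0.
    have mg : measurable_fun setT g.
      apply: (pw_meas _ _ _ (fun i _ => gi i (X i)) mA disj cov) => [i|i x Aix].
        exact: measurable_cst.
      by rewrite (gE _ _ Aix) -(eqx _ _ Aix).
    apply: (core _ _ _ (fun i => gi i (X i)) 0 mA disj cov muA mg (lexx 0)) => i x Aix.
    by rewrite (gE _ _ Aix) -(eqx _ _ Aix) subrr normr0.
  have Kpos : 0 < K by rewrite lt_def Kn0 K0.
  by rewrite gt0_muley ?lte_fin // leey.
- by rewrite leeNy_eq in L0.
Qed.

End Helpers.

Theorem lemma21 (R : realType) (dT : measure_display) (T : measurableType dT)
  (dist : T -> T -> R) (nu : probability T R) (C : R) (n N : nat)
  (A : 'I_N -> set T) (X : 'I_N -> T) :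
  is_metric dist -> metric_complete dist ->
  (@measurable _ T) = <<s metric_open dist >> ->
  tagged_partition dist nu C A X ->
  (forall y : T -> 'rV[R]_n, lipschitz_map dist y ->
     forall f : T -> 'rV[R]_n -> R, test_function dist f ->
       (`| monokinetic_pair nu y f - (empirical_pair X (fun i => y (X i)) f)%:E |
         <= (C / N%:R)%:E * Lip dist (fun x => f x (y x)))%E) /\
  (forall Xi : 'I_N -> 'rV[R]_n,
     forall f : T -> 'rV[R]_n -> R, test_function dist f ->
       (`| monokinetic_pair nu (piecewise_const A Xi) f - (empirical_pair X Xi f)%:E |
         <= (C / N%:R)%:E * \big[maxe/-oo]_(i < N) Lip dist (fun x => f x (Xi i)))%E).
Proof.
move=> dm _ hm tp; split.
- move=> y _ f _.
  exact: (@meta _ _ _ nu _ _ _ _ _ hm dm tp (fun x => f x (y x)) (fun _ x => f x (y x)) _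
    (fun _ _ _ => erefl) (fun _ => lexx _)).
- move=> Xi f _.
  have disj : forall i j, i != j -> A i `&` A j = set0 by case: tp => -[].
  apply: (@meta _ _ _ nu _ _ _ _ _ hm dm tp _ (fun i x => f x (Xi i))).
  + move=> i x Aix; congr f.
    rewrite /piecewise_const (bigD1 i) //= indicE mem_set // scale1r big1 ?addr0 //.
    move=> j ji; rewrite indicE memNset ?scale0r //.
    move=> Ajx; have : (A j `&` A i) x by split.
    by rewrite disj.
  + by move=> i; rewrite (bigD1 i) //= le_max lexx.
Qed.
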